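(* Let $X=\{x_j:j\in J\}\subset\mathbb{R}^2$ be finite and let $\mathcal{D}$ be any farthest point Delaunay triangulation of $X$. A point $s$ is the $1$-centre of $X$ if and only if there is a face $D$ of $\mathcal{D}$ such that $s\in\mathrm{int}(D)$ and $s\in V_D$.
   Context: The $1$-centre of $X$ is the centre of the minimum enclosing circle of $X$. $V(x_j)=\{s:\|s-x_j\|=\max_{i\in J}\|s-x_i\|\}$ are the regions of the farthest point Voronoi diagram. A farthest point Delaunay triangulation of $X$ is a triangulation of the extreme points of $X$ in which the circumcircle of every triangle encloses all of $X$; its faces are its vertices, edges and triangles. For a face $D$ with vertex index set $J_D$, $V_D=\bigcap_{j\in J_D}V(x_j)$. $\mathrm{int}$ denotes relative interior, with $\mathrm{int}(\{x\})=\{x\}$. *)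

(* Defs.v *)
From HB Require Import structures.
From mathcomp Require Import all_boot all_order all_algebra.
From mathcomp Require Import reals.
Set Implicit Arguments. Unset Strict Implicit. Unset Printing Implicit Defensive.
Import Order.TTheory GRing.Theory Num.Theory.
Local Open Scope ring_scope.

Section Planar.
Variable R : realType.
Definition pt := (R * R)%type.

Definition dist (p q : pt) : R :=
  Num.sqrt ((p.1 - q.1) ^+ 2 + (p.2 - q.2) ^+ 2).

Variables (J : finType) (x : J -> pt).

Definition comb (l : J -> R) (S : {set J}) : pt :=
  (\sum_(j in S) l j * (x j).1, \sum_(j in S) l j * (x j).2).

Definition conv (S : {set J}) (p : pt) : Prop :=
  exists l : J -> R, (forall j, j \in S -> 0 <= l j) /\
    \sum_(j in S) l j = 1 /\ comb l S = p.

(* relative interior of the simplex with vertices {x_j : j in S}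
   (positive barycentric coordinates; int {x} = {x}) *)
Definition relint (S : {set J}) (p : pt) : Prop :=
  exists l : J -> R, (forall j, j \in S -> 0 < l j) /\
    \sum_(j in S) l j = 1 /\ comb l S = p.

Definition aff_indep (S : {set J}) : Prop :=
  forall l : J -> R, \sum_(j in S) l j = 0 -> comb l S = (0, 0) ->
    forall j, j \in S -> l j = 0.

Definition extreme (j : J) : Prop := ~ conv [set i | i != j] (x j).

(* K is a triangulation of the extreme points of X: a geometric simplicial
   complex (faces = vertices, edges, triangles) whose vertices are exactly the
   extreme points of X and whose union is conv X. *)
Definition triangulation (K : {set {set J}}) : Prop :=
  [/\ forall D, D \in K -> D != set0 /\ (#|D| <= 3)%N /\ aff_indep D,
      forall D E : {set J}, D \in K -> E \subset D -> E != set0 -> E \in K,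
      forall j, [set j] \in K <-> extreme j,
      forall D E, D \in K -> E \in K ->
        forall p, conv D p /\ conv E p <-> conv (D :&: E) p &
      forall p, conv [set: J] p <-> exists2 D, D \in K & conv D p].

Definition farthest_delaunay (K : {set {set J}}) : Prop :=
  triangulation K /\
  forall D, D \in K -> #|D| = 3%N ->
    exists (c : pt) (r : R), (forall j, j \in D -> dist c (x j) = r) /\
                             (forall i, dist c (x i) <= r).

Definition maxdist (s : pt) : R := \big[Num.max/0]_(i : J) dist s (x i).

Definition one_centre (s : pt) : Prop := forall t, maxdist s <= maxdist t.

Definition Vor (j : J) (s : pt) : Prop := dist s (x j) = maxdist s.

Definition VorD (D : {set J}) (s : pt) : Prop := forall j, j \in D -> Vor j s.
End Planar.

(* Main.v *)
Require Import Defs.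
From HB Require Import structures.
From mathcomp Require Import all_boot all_order all_algebra.
From mathcomp Require Import reals.
From mathcomp Require Import ring lra.
From Stdlib Require Import Classical.
Set Implicit Arguments. Unset Strict Implicit.
Import Order.TTheory GRing.Theory Num.Theory.
Local Open Scope ring_scope.

Section Work.
Variable R : realType.
Variables (J : finType) (x : J -> pt R).
Local Notation pt := (pt R).

Definition d2 (p q : pt) : R := (p.1 - q.1) ^+ 2 + (p.2 - q.2) ^+ 2.

Lemma d2_ge0 p q : 0 <= d2 p q.
Proof. by rewrite /d2 addr_ge0 // sqr_ge0. Qed.

Lemma d2C p q : d2 p q = d2 q p.
Proof. rewrite /d2; ring. Qed.

Lemma distE p q : @dist R p q = Num.sqrt (d2 p q).
Proof. by []. Qed.

Lemma dist_ge0 p q : 0 <= @dist R p q.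
Proof. by rewrite distE sqrtr_ge0. Qed.

Lemma sq_dist p q : @dist R p q ^+ 2 = d2 p q.
Proof. by rewrite distE sqr_sqrtr // d2_ge0. Qed.

Lemma maxdist_ge0 s : 0 <= maxdist x s.
Proof. exact: bigmax_ge_id. Qed.

Lemma le_maxdist s i : @dist R s (x i) <= maxdist x s.
Proof. exact: (le_bigmax 0 (fun i => @dist R s (x i)) i). Qed.

Lemma maxdist_le s c : 0 <= c -> (forall i, @dist R s (x i) <= c) -> maxdist x s <= c.
Proof. by move=> c0 h; apply: bigmax_le. Qed.

Lemma maxdist_attained s : (0 < #|J|)%N -> exists i, maxdist x s = @dist R s (x i).
Proof.
move/card_gt0P=> [j _].
exists [arg max_(i > j) @dist R s (x i)]%O.
rewrite /maxdist; apply: (bigmax_eq_arg 0 j predT) => // i _.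
exact: dist_ge0.
Qed.

Lemma le_d2_max s i : d2 s (x i) <= maxdist x s ^+ 2.
Proof.
rewrite -sq_dist; have h1 := dist_ge0 s (x i); have h2 := le_maxdist s i.
nra.
Qed.

Lemma vor_of_d2 s j : d2 s (x j) = maxdist x s ^+ 2 -> Vor x j s.
Proof.
move=> h; rewrite /Vor distE h sqrtr_sqr ger0_norm //; exact: maxdist_ge0.
Qed.


Definition dl (k i : J) : R := (i == k)%:R.

Definition mu3 (a : R) (k1 : J) (b : R) (k2 : J) (c : R) (k3 : J) (i : J) : R :=
  a * dl k1 i + b * dl k2 i + c * dl k3 i.

Lemma sum_dl (k : J) (f : J -> R) : \sum_i dl k i * f i = f k.
Proof.
rewrite (bigD1 k) //= /dl eqxx mul1r big1 ?addr0 // => i /negbTE ->.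
by rewrite mul0r.
Qed.

Lemma sum_mu3 a k1 b k2 c k3 (f : J -> R) :
  \sum_i mu3 a k1 b k2 c k3 i * f i = a * f k1 + b * f k2 + c * f k3.
Proof.
rewrite /mu3.
under eq_bigr do rewrite !mulrDl -!mulrA.
by rewrite !big_split /= -!mulr_sumr !sum_dl.
Qed.

Lemma sum_mu3_1 a k1 b k2 c k3 :
  \sum_i mu3 a k1 b k2 c k3 i = a + b + c.
Proof.
have := sum_mu3 a k1 b k2 c k3 (fun _ => 1); rewrite !mulr1 => <-.
by apply: eq_bigr => i _; rewrite mulr1.
Qed.

Lemma dl_ge0 k i : 0 <= dl k i.
Proof. by rewrite /dl ler0n. Qed.

Lemma mu3_ge0 a k1 b k2 c k3 i : 0 <= a -> 0 <= b -> 0 <= c ->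
  0 <= mu3 a k1 b k2 c k3 i.
Proof.
move=> ha hb hc; rewrite /mu3.
by rewrite !addr_ge0 // mulr_ge0 // dl_ge0.
Qed.

Lemma mu3_out a k1 b k2 c k3 i : i != k1 -> i != k2 -> i != k3 ->
  mu3 a k1 b k2 c k3 i = 0.
Proof.
by move=> h1 h2 h3; rewrite /mu3 /dl (negbTE h1) (negbTE h2) (negbTE h3) !mulr0 !addr0.
Qed.

Lemma keyP (Pa Qa Pb Qb : R) : 0 < Qa * Qb ->
  - (Pa / Qa) <= - (Pb / Qb) -> Pb * Qa <= Pa * Qb.
Proof.
move=> hq; rewrite lerN2 => h.
have Qa0 : Qa != 0 by apply/eqP => e; move: hq; rewrite e mul0r ltxx.
have Qb0 : Qb != 0 by apply/eqP => e; move: hq; rewrite e mulr0 ltxx.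
have h2 : Pb / Qb * (Qa * Qb) <= Pa / Qa * (Qa * Qb) by rewrite ler_pM2r.
have e1 : Pb / Qb * (Qa * Qb) = Pb * Qa by field.
have e2 : Pa / Qa * (Qa * Qb) = Pa * Qb by field.
by rewrite -e1 -e2.
Qed.

Lemma gordanPQ (F : pred J) (P Q : J -> R) (j0 : J) :
  F j0 -> 0 < P j0 -> Q j0 = 0 ->
  (forall w1 w2 : R, exists j, F j /\ w1 * P j + w2 * Q j <= 0) ->
  exists mu : J -> R, [/\ forall j, 0 <= mu j, forall j, ~~ F j -> mu j = 0,
    \sum_j mu j = 1, \sum_j mu j * P j = 0 & \sum_j mu j * Q j = 0].
Proof.
move=> Fj0 P0 Q0 H.
have nF k i : F k -> ~~ F i -> i != k.
  by move=> Fk Fi; apply/eqP => e; move: Fi; rewrite e Fk.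
case: (boolP [exists j, [&& F j, Q j == 0 & P j <= 0]]) =>
   [/existsP [j /and3P [Fj /eqP Qj Pj]] | noX].
  have dpos : 0 < P j0 - P j by lra.
  exists (mu3 (- P j / (P j0 - P j)) j0 (P j0 / (P j0 - P j)) j 0 j0); split.
  - move=> i; apply: mu3_ge0 => //; apply: divr_ge0; lra.
  - by move=> i Fi; rewrite mu3_out // nF.
  - by rewrite sum_mu3_1; field; lra.
  - by rewrite sum_mu3; field; lra.
  - by rewrite sum_mu3 Q0 Qj; field; lra.
have noX' j : F j -> Q j = 0 -> 0 < P j.
  move=> Fj Qj; rewrite ltNge; apply/negP => Pj; move/existsP: noX; apply.
  by exists j; rewrite Fj Qj eqxx Pj.
pose key j := - (P j / Q j).
have contra (w1 w2 : R) : (forall j, F j -> 0 < w1 * P j + w2 * Q j) -> False.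
  move=> hw; have [j [Fj hj]] := H w1 w2; have := hw j Fj; lra.
case: (boolP [exists j, F j && (0 < Q j)]) => [/existsP [ju /andP [Fju Qju]] | noU];
case: (boolP [exists j, F j && (Q j < 0)]) => [/existsP [jl /andP [Fjl Qjl]] | noL].
-
  case: (@arg_maxP _ _ _ ju (fun i => F i && (0 < Q i)) key) => [|u /andP [Fu Qu] umax].
    by rewrite Fju Qju.
  case: (@arg_minP _ _ _ jl (fun i => F i && (Q i < 0)) key) => [|l /andP [Fl Ql] lmin].
    by rewrite Fjl Qjl.
  have cu j : F j -> 0 < Q j -> 0 <= P j * Q u - Q j * P u.
    move=> Fj Qj; have := umax j; rewrite Fj Qj => /(_ isT) h.
    have := @keyP (P j) (Q j) (P u) (Q u).
    rewrite mulr_gt0 // => /(_ isT h); lra.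
  have cl j : F j -> Q j < 0 -> 0 <= P l * Q j - Q l * P j.
    move=> Fj Qj; have := lmin j; rewrite Fj Qj => /(_ isT) h.
    have := @keyP (P l) (Q l) (P j) (Q j).
    rewrite (nmulr_rgt0 _ Ql) Qj => /(_ isT h); lra.
  set cr := P u * Q l - Q u * P l.
  case: (lerP 0 cr) => hcr.
    set S := cr - Q l * P j0 + P j0 * Q u.
    have Spos : 0 < S.
      have : 0 < - Q l * P j0 by rewrite mulr_gt0 // oppr_gt0.
      have : 0 < P j0 * Q u by rewrite mulr_gt0.
      rewrite /S; lra.
    exists (mu3 (cr / S) j0 (- Q l * P j0 / S) u (P j0 * Q u / S) l); split.
    + move=> i; apply: mu3_ge0; apply: divr_ge0; try lra.
      * by apply: mulr_ge0; lra.
      * by apply: mulr_ge0; lra.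
    + by move=> i Fi; rewrite mu3_out // nF.
    + rewrite sum_mu3_1 /S; field; move: Spos; rewrite /S; lra.
    + rewrite sum_mu3 /S /cr; field; move: Spos; rewrite /S /cr; lra.
    + rewrite sum_mu3 Q0 /S /cr; field; move: Spos; rewrite /S /cr; lra.
  exfalso; apply: (contra (Q u - Q l) (P l - P u)) => j Fj.
  case: (ltrgtP (Q j) 0) => Qj.
  + have h1 := cl j Fj Qj.
    have e : - Q l * ((Q u - Q l) * P j + (P l - P u) * Q j) =
        (P l * Q j - Q l * P j) * (Q u - Q l) + (- Q j) * (- cr) by rewrite /cr; ring.
    have h2 : 0 < (P l * Q j - Q l * P j) * (Q u - Q l) + (- Q j) * (- cr).
      have : 0 < (- Q j) * (- cr) by apply: mulr_gt0; lra.
      have : 0 <= (P l * Q j - Q l * P j) * (Q u - Q l) by apply: mulr_ge0; lra.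
      lra.
    rewrite -e in h2.
    by move: h2; rewrite pmulr_rgt0 // oppr_gt0.
  + have h1 := cu j Fj Qj.
    have e : Q u * ((Q u - Q l) * P j + (P l - P u) * Q j) =
        (P j * Q u - Q j * P u) * (Q u - Q l) + Q j * (- cr) by rewrite /cr; ring.
    have h2 : 0 < (P j * Q u - Q j * P u) * (Q u - Q l) + Q j * (- cr).
      have : 0 < Q j * (- cr) by apply: mulr_gt0; lra.
      have : 0 <= (P j * Q u - Q j * P u) * (Q u - Q l) by apply: mulr_ge0; lra.
      lra.
    rewrite -e in h2.
    by move: h2; rewrite pmulr_rgt0.
  + rewrite Qj mulr0 addr0; apply: mulr_gt0; first lra.
    exact: noX'.
-
  case: (@arg_maxP _ _ _ ju (fun i => F i && (0 < Q i)) key) => [|u /andP [Fu Qu] umax].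
    by rewrite Fju Qju.
  have cu j : F j -> 0 < Q j -> 0 <= P j * Q u - Q j * P u.
    move=> Fj Qj; have := umax j; rewrite Fj Qj => /(_ isT) h.
    have := @keyP (P j) (Q j) (P u) (Q u).
    rewrite mulr_gt0 // => /(_ isT h); lra.
  exfalso; apply: (contra (Q u) (P j0 - P u)) => j Fj.
  case: (ltrgtP (Q j) 0) => Qj.
  + by move/existsP: noL; case; exists j; rewrite Fj Qj.
  + have h1 := cu j Fj Qj.
    have : 0 < P j0 * Q j by rewrite mulr_gt0.
    have e : Q u * P j + (P j0 - P u) * Q j = (P j * Q u - Q j * P u) + P j0 * Q j by ring.
    rewrite e; lra.
  + rewrite Qj mulr0 addr0; apply: mulr_gt0 => //.
    exact: noX'.
-
  case: (@arg_minP _ _ _ jl (fun i => F i && (Q i < 0)) key) => [|l /andP [Fl Ql] lmin].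
    by rewrite Fjl Qjl.
  have cl j : F j -> Q j < 0 -> 0 <= P l * Q j - Q l * P j.
    move=> Fj Qj; have := lmin j; rewrite Fj Qj => /(_ isT) h.
    have := @keyP (P l) (Q l) (P j) (Q j).
    rewrite (nmulr_rgt0 _ Ql) Qj => /(_ isT h); lra.
  exfalso; apply: (contra (- Q l) (P l - P j0)) => j Fj.
  case: (ltrgtP (Q j) 0) => Qj.
  + have h1 := cl j Fj Qj.
    have : 0 < P j0 * (- Q j) by rewrite mulr_gt0 // oppr_gt0.
    have e : - Q l * P j + (P l - P j0) * Q j = (P l * Q j - Q l * P j) + P j0 * (- Q j) by ring.
    rewrite e; lra.
  + by move/existsP: noU; case; exists j; rewrite Fj Qj.
  + rewrite Qj mulr0 addr0; apply: mulr_gt0; first lra.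
    exact: noX'.
-
  exfalso; apply: (contra 1 0) => j Fj.
  rewrite mul1r mul0r addr0.
  case: (ltrgtP (Q j) 0) => Qj.
  + by move/existsP: noL; case; exists j; rewrite Fj Qj.
  + by move/existsP: noU; case; exists j; rewrite Fj Qj.
  + exact: noX'.
Qed.


Lemma Qineq s : (0 < #|J|)%N -> one_centre x s ->
  forall q, maxdist x s ^+ 2 + d2 q s <= maxdist x q ^+ 2.
Proof.
move=> Jn hs q.
have r0 := maxdist_ge0 s.
apply/ler_addgt0Pr => e e0.
have d0 := d2_ge0 q s.
pose eps := e / (d2 q s + e + 1).
have eps0 : 0 < eps by apply: divr_gt0 => //; lra.
have epsE : eps * (d2 q s + e + 1) = e by rewrite /eps; field; lra.
have eps1 : eps <= 1 by nra.
have epsd : eps * d2 q s <= e by nra.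
pose t : pt := (s.1 + eps * (q.1 - s.1), s.2 + eps * (q.2 - s.2)).
have [i hi] := maxdist_attained t Jn.
have h1 : maxdist x s <= @dist R t (x i) by rewrite -hi; exact: hs.
have h2 : maxdist x s ^+ 2 <= d2 t (x i).
  rewrite -sq_dist; have := dist_ge0 t (x i); nra.
have id : d2 t (x i) = (1 - eps) * d2 s (x i) + eps * d2 q (x i)
                        - eps * (1 - eps) * d2 q s by rewrite /d2 /t /=; ring.
have h3 := le_d2_max s i; have h4 := le_d2_max q i.
have h5 : (1 - eps) * d2 s (x i) <= (1 - eps) * maxdist x s ^+ 2.
  by apply: ler_wpM2l => //; lra.
have h6 : eps * d2 q (x i) <= eps * maxdist x q ^+ 2.
  by apply: ler_wpM2l => //; lra.
have h7 : eps * (maxdist x s ^+ 2 + d2 q s - maxdist x q ^+ 2 - eps * d2 q s) <= 0.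
  have e7 : eps * (maxdist x s ^+ 2 + d2 q s - maxdist x q ^+ 2 - eps * d2 q s) =
     maxdist x s ^+ 2 - ((1 - eps) * maxdist x s ^+ 2 + eps * maxdist x q ^+ 2
                        - eps * (1 - eps) * d2 q s) by ring.
  rewrite e7; lra.
rewrite pmulr_rle0 // in h7; lra.
Qed.

Lemma farthest_dir s : (0 < #|J|)%N -> one_centre x s ->
  forall w : pt, exists j, d2 s (x j) = maxdist x s ^+ 2 /\
     ((x j).1 - s.1) * w.1 + ((x j).2 - s.2) * w.2 <= 0.
Proof.
move=> Jn hs w; apply: NNPP => hn.
set r2 := maxdist x s ^+ 2.
pose h j := r2 - d2 s (x j).
pose g j := ((x j).1 - s.1) * w.1 + ((x j).2 - s.2) * w.2.
have h0 j : 0 <= h j by rewrite /h subr_ge0; exact: le_d2_max.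
have hg j : h j = 0 -> 0 < g j.
  move=> hj; rewrite ltNge; apply/negP => gj; apply: hn; exists j; split => //.
  by move: hj; rewrite /h => /eqP; rewrite subr_eq0 => /eqP <-.
pose e j := (h j + (if 0 < g j then 1 else 0)) / (2 * (1 + `|g j|)).
have epos j : 0 < e j.
  apply: divr_gt0; last by have := normr_ge0 (g j); lra.
  case: ifP => gj; first by have := h0 j; lra.
  rewrite addr0; have := h0 j; rewrite le0r => /orP [/eqP hj|//].
  by move: gj; rewrite hg.
have [j1 _] : exists j1, j1 \in J by apply/card_gt0P.
case: (@arg_minP _ _ _ j1 predT e) => // k _ kmin.
set eps := e k.
have eps0 : 0 < eps := epos k.
pose q : pt := (s.1 + eps * w.1, s.2 + eps * w.2).
have hQ := Qineq Jn hs q.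
have [i hi] := maxdist_attained q Jn.
rewrite hi sq_dist in hQ.
have id1 : d2 q s = eps ^+ 2 * (w.1 ^+ 2 + w.2 ^+ 2) by rewrite /d2 /q /=; ring.
have id2 : d2 q (x i) = d2 s (x i) - 2 * eps * g i + eps ^+ 2 * (w.1 ^+ 2 + w.2 ^+ 2).
  by rewrite /d2 /q /g /=; ring.
have hc : h i + 2 * eps * g i <= 0 by move: hQ; rewrite id1 id2 /h -/r2; lra.
have ei : eps <= e i by exact: kmin.
case: (ltP 0 (g i)) => gi.
  have := h0 i; have : 0 < eps * g i by apply: mulr_gt0. lra.
have hpos : 0 < h i.
  by have := h0 i; rewrite le0r => /orP [/eqP /hg|//]; lra.
have eE : h i + 2 * e i * g i = h i / (1 - g i).
  rewrite /e ltNge gi /= addr0 ler0_norm //; field; lra.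
have : 0 < h i / (1 - g i) by apply: divr_gt0; lra.
have : e i * g i <= eps * g i by apply: ler_wnM2r.
lra.
Qed.


Lemma centre_in_hull s : (0 < #|J|)%N -> one_centre x s ->
  exists mu : J -> R, [/\ forall j, 0 <= mu j,
    forall j, mu j != 0 -> d2 s (x j) = maxdist x s ^+ 2,
    \sum_j mu j = 1, \sum_j mu j * (x j).1 = s.1 & \sum_j mu j * (x j).2 = s.2].
Proof.
move=> Jn hs.
set r2 := maxdist x s ^+ 2.
have [j0 [Fj0 _]] := farthest_dir Jn hs (0, 0).
case: (boolP (((x j0).1 == s.1) && ((x j0).2 == s.2))) => [/andP [/eqP e1 /eqP e2] | ne].
  exists (mu3 1 j0 0 j0 0 j0); split.
  - by move=> i; apply: mu3_ge0.
  - move=> i; case: (eqVneq i j0) => [-> //|ne].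
    by rewrite mu3_out // eqxx.
  - by rewrite sum_mu3_1; ring.
  - by rewrite sum_mu3 e1; ring.
  - by rewrite sum_mu3 e2; ring.
set a1 := (x j0).1 - s.1; set a2 := (x j0).2 - s.2.
have apos : 0 < a1 ^+ 2 + a2 ^+ 2.
  case: (ltrgtP (a1 ^+ 2 + a2 ^+ 2) 0) => //.
  - have := sqr_ge0 a1; have := sqr_ge0 a2; lra.
  - move=> h; exfalso; move: ne.
    have h1 : a1 ^+ 2 = 0 by have := sqr_ge0 a1; have := sqr_ge0 a2; lra.
    have h2 : a2 ^+ 2 = 0 by have := sqr_ge0 a1; have := sqr_ge0 a2; lra.
    move/eqP: h1; rewrite sqrf_eq0 subr_eq0 => ->.
    by move/eqP: h2; rewrite sqrf_eq0 subr_eq0 => ->.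
pose P j := a1 * ((x j).1 - s.1) + a2 * ((x j).2 - s.2).
pose Q j := a1 * ((x j).2 - s.2) - a2 * ((x j).1 - s.1).
have [||||mu [mu0 muF mu1 muP muQ]] :=
  @gordanPQ (fun j => d2 s (x j) == r2) P Q j0.
- by rewrite Fj0.
- by rewrite /P -/a1 -/a2 -!expr2.
- by rewrite /Q -/a1 -/a2; ring.
- move=> w1 w2.
  have [j [Fj hj]] := farthest_dir Jn hs (w1 * a1 - w2 * a2, w1 * a2 + w2 * a1).
  exists j; split; first by rewrite Fj.
  move: hj => /=; rewrite /P /Q.
  have -> : w1 * (a1 * ((x j).1 - s.1) + a2 * ((x j).2 - s.2)) +
       w2 * (a1 * ((x j).2 - s.2) - a2 * ((x j).1 - s.1)) =
     ((x j).1 - s.1) * (w1 * a1 - w2 * a2) + ((x j).2 - s.2) * (w1 * a2 + w2 * a1)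
     by ring.
  done.
exists mu; split => //.
- move=> j mj; apply/eqP; apply: contraNT mj => hj; apply/eqP; exact: muF.
- have e : (a1 ^+ 2 + a2 ^+ 2) * (\sum_j mu j * (x j).1 - s.1) =
           a1 * \sum_j mu j * P j - a2 * \sum_j mu j * Q j.
    have -> : \sum_j mu j * (x j).1 - s.1 = \sum_j mu j * ((x j).1 - s.1).
      apply/esym; under eq_bigr do rewrite mulrBr; by rewrite sumrB -mulr_suml mu1 mul1r.
    rewrite !mulr_sumr -sumrB; apply: eq_bigr => j _; rewrite /P /Q; ring.
  move: e; rewrite muP muQ !mulr0 subr0 => /eqP; rewrite mulf_eq0.
  case/orP => [/eqP h|]; first by move: apos; rewrite h ltxx.
  by rewrite subr_eq0 => /eqP.
- have e : (a1 ^+ 2 + a2 ^+ 2) * (\sum_j mu j * (x j).2 - s.2) =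
           a2 * \sum_j mu j * P j + a1 * \sum_j mu j * Q j.
    have -> : \sum_j mu j * (x j).2 - s.2 = \sum_j mu j * ((x j).2 - s.2).
      apply/esym; under eq_bigr do rewrite mulrBr; by rewrite sumrB -mulr_suml mu1 mul1r.
    rewrite !mulr_sumr -big_split /=; apply: eq_bigr => j _; rewrite /P /Q; ring.
  move: e; rewrite muP muQ !mulr0 addr0 => /eqP; rewrite mulf_eq0.
  case/orP => [/eqP h|]; first by move: apos; rewrite h ltxx.
  by rewrite subr_eq0 => /eqP.
Qed.

Lemma comb1 (l : J -> R) S : (comb x l S).1 = \sum_(j in S) l j * (x j).1.
Proof. by []. Qed.
Lemma comb2 (l : J -> R) S : (comb x l S).2 = \sum_(j in S) l j * (x j).2.
Proof. by []. Qed.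

Lemma wsum_d2 (S : {set J}) (l : J -> R) (t s : pt) :
  \sum_(j in S) l j = 1 -> comb x l S = s ->
  \sum_(j in S) l j * d2 t (x j) = d2 t s + \sum_(j in S) l j * d2 s (x j).
Proof.
move=> l1 hc.
have c1 : \sum_(j in S) l j * (x j).1 = s.1 by rewrite -hc.
have c2 : \sum_(j in S) l j * (x j).2 = s.2 by rewrite -hc.
rewrite (eq_bigr (fun j => l j * d2 t s + l j * d2 s (x j)
   + 2 * (t.1 - s.1) * (l j * (s.1 - (x j).1))
   + 2 * (t.2 - s.2) * (l j * (s.2 - (x j).2)))); last first.
  by move=> j _; rewrite /d2; ring.
have z1 : \sum_(j in S) l j * (s.1 - (x j).1) = 0.
  under eq_bigr do rewrite mulrBr.
  by rewrite sumrB -mulr_suml l1 mul1r c1 subrr.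
have z2 : \sum_(j in S) l j * (s.2 - (x j).2) = 0.
  under eq_bigr do rewrite mulrBr.
  by rewrite sumrB -mulr_suml l1 mul1r c2 subrr.
rewrite !big_split /= -!mulr_sumr z1 z2 !mulr0 !addr0 -mulr_suml l1 mul1r.
done.
Qed.

Lemma d2_of_vor s j : Vor x j s -> d2 s (x j) = maxdist x s ^+ 2.
Proof. by rewrite /Vor => <-; rewrite sq_dist. Qed.

Lemma reverse_dir s D : relint x D s -> VorD x D s -> one_centre x s.
Proof.
move=> [l [lpos [l1 hc]]] hv t.
have e := wsum_d2 t l1 hc.
have e2 : \sum_(j in D) l j * d2 s (x j) = maxdist x s ^+ 2.
  rewrite (eq_bigr (fun j => l j * maxdist x s ^+ 2)).
    by rewrite -mulr_suml l1 mul1r.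
  by move=> j jD; rewrite d2_of_vor //; apply: hv.
have e3 : \sum_(j in D) l j * d2 t (x j) <= maxdist x t ^+ 2.
  rewrite -[X in _ <= X]mul1r -l1 mulr_suml.
  apply: ler_sum => j jD; apply: ler_wpM2l; first exact: ltW (lpos j jD).
  exact: le_d2_max.
have := d2_ge0 t s; have := maxdist_ge0 s; have := maxdist_ge0 t.
rewrite e e2 in e3; nra.
Qed.

Lemma sum_sub (A B : {set J}) (f : J -> R) : A \subset B ->
  (forall j, j \in B -> j \notin A -> f j = 0) ->
  \sum_(j in B) f j = \sum_(j in A) f j.
Proof.
move=> AB h; rewrite (big_setID A) /=.
have -> : B :&: A = A by apply/setIidPr.
rewrite [X in _ + X]big1 ?addr0 // => j; rewrite inE => /andP [jA jB].
exact: h.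
Qed.

Lemma support_face K (D : {set J}) s : triangulation x K -> D \in K -> conv x D s ->
  exists2 D', D' \in K & D' \subset D /\ relint x D' s.
Proof.
move=> [_ hclos _ _ _] DK [l [l0 [l1 hc]]].
pose D' := [set j in D | 0 < l j].
have sub : D' \subset D by apply/subsetP => j; rewrite inE => /andP [].
have z (f : J -> R) : (forall j, l j = 0 -> f j = 0) ->
   \sum_(j in D) f j = \sum_(j in D') f j.
  move=> hf; apply: sum_sub => // j jD; rewrite inE jD /= => hj.
  by apply: hf; apply/eqP; rewrite eq_le l0 // andbT leNgt.
have s1 : \sum_(j in D') l j = 1 by rewrite -z.
have ne : D' != set0.
  apply/eqP => e; move: s1; rewrite e big_set0 => /eqP; rewrite eq_sym oner_eq0.
  done.
exists D'; first exact: hclos DK sub ne.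
split => //; exists l; split => //.
- by move=> j; rewrite inE => /andP [].
split => //; rewrite -hc /comb.
by rewrite -z => [|j ->]; [rewrite -z => [//|j ->]|]; rewrite mul0r.
Qed.

Lemma tri_case s (D' T : {set J}) (l : J -> R) (c : pt) (rT : R) :
  (0 < #|J|)%N -> one_centre x s -> D' \subset T ->
  (forall j, j \in T -> @dist R c (x j) = rT) -> (forall i, @dist R c (x i) <= rT) ->
  (forall j, j \in D' -> 0 < l j) -> \sum_(j in D') l j = 1 -> comb x l D' = s ->
  forall j, j \in D' -> d2 s (x j) = maxdist x s ^+ 2.
Proof.
move=> Jn hs sub hT hle lpos l1 hc.
have [i0 _] : exists i0, i0 \in J by apply/card_gt0P.
have rT0 : 0 <= rT by apply: le_trans (hle i0); exact: dist_ge0.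
have e := wsum_d2 c l1 hc.
have e1 : \sum_(j in D') l j * d2 c (x j) = rT ^+ 2.
  rewrite (eq_bigr (fun j => l j * rT ^+ 2)); first by rewrite -mulr_suml l1 mul1r.
  move=> j jD; rewrite -sq_dist hT //; exact: (subsetP sub).
have hq := Qineq Jn hs c.
have hM : maxdist x c <= rT by apply: maxdist_le.
have hM2 : maxdist x c ^+ 2 <= rT ^+ 2.
  have := maxdist_ge0 c; nra.
have hsum : maxdist x s ^+ 2 <= \sum_(j in D') l j * d2 s (x j).
  move: e; rewrite e1; lra.
pose f j := l j * (maxdist x s ^+ 2 - d2 s (x j)).
have f0 : forall j, j \in D' -> 0 <= f j.
  move=> j jD; apply: mulr_ge0; first exact: ltW (lpos j jD).
  by rewrite subr_ge0; apply: le_d2_max.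
have fs : \sum_(j in D') f j = 0.
  apply/eqP; rewrite eq_le; apply/andP; split; last by apply: sumr_ge0.
  rewrite /f; under eq_bigr do rewrite mulrBr.
  by rewrite sumrB -mulr_suml l1 mul1r subr_le0.
move=> j jD; have := psumr_eq0P f0 fs jD; rewrite /f => /eqP.
rewrite mulf_eq0 => /orP [/eqP h|]; first by move: (lpos j jD); rewrite h ltxx.
by rewrite subr_eq0 => /eqP.
Qed.

Lemma sum_nota (a : J) (f : J -> R) : f a = 0 ->
  \sum_(i in [set i | i != a]) f i = \sum_i f i.
Proof.
move=> fa; rewrite [RHS](bigD1 a) //= fa add0r.
by apply: eq_bigl => i; rewrite inE.
Qed.

Lemma vertex_case K s a (mu : J -> R) : triangulation x K ->
  [set a] \in K -> s = x a -> (forall j, 0 <= mu j) ->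
  (forall j, mu j != 0 -> d2 s (x j) = maxdist x s ^+ 2) ->
  \sum_j mu j = 1 -> \sum_j mu j * (x j).1 = s.1 -> \sum_j mu j * (x j).2 = s.2 ->
  d2 s (x a) = maxdist x s ^+ 2.
Proof.
move=> [_ _ hext _ _] aK sa mu0 muF mu1 m1 m2.
apply: NNPP => hn.
have mua : mu a = 0.
  by case: (eqVneq (mu a) 0) => // /muF h; exfalso; apply: hn.
have ea : extreme x a by apply/hext.
apply: ea; exists mu; split; first by move=> j _.
split; first by rewrite sum_nota.
rewrite /comb sum_nota ?mua ?mul0r // sum_nota ?mua ?mul0r //.
by rewrite m1 m2 -sa; case: (s).
Qed.

Lemma pigeon_aux (T : eqType) (Pn : nat -> T -> Prop) (s : seq T) N0 :
  (forall n, (N0 <= n)%N -> exists2 E, E \in s & Pn n E) ->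
  exists2 E, E \in s & forall N, exists n, (N <= n)%N /\ Pn n E.
Proof.
elim: s N0 => [|E s IH] N0 h.
  by have [E] := h N0 (leqnn _); rewrite in_nil.
case: (classic (forall N, exists n, (N <= n)%N /\ Pn n E)) => [hE | hE].
  by exists E => //; rewrite inE eqxx.
have [N1 hN1] : exists N1, forall n, (N1 <= n)%N -> ~ Pn n E.
  apply: NNPP => c; apply: hE => N; apply: NNPP => c2; apply: c.
  by exists N => n hn pn; apply: c2; exists n.
have [|E' E's HE'] := IH (maxn N0 N1).
  move=> n hn; have [E'' ] := h n (leq_trans (leq_maxl _ _) hn).
  rewrite inE => /orP [/eqP -> pn|E''s pn]; last by exists E''.
  by exfalso; apply: (hN1 n) => //; apply: leq_trans (leq_maxr _ _) hn.
by exists E' => //; rewrite inE E's orbT.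
Qed.

Lemma pigeon (T : finType) (A : {set T}) (Pn : nat -> T -> Prop) :
  (forall n, exists2 E, E \in A & Pn n E) ->
  exists2 E, E \in A & forall N, exists n, (N <= n)%N /\ Pn n E.
Proof.
move=> h; have [|E] := @pigeon_aux _ Pn (enum A) 0.
  by move=> n _; have [E EA pE] := h n; exists E; rewrite ?mem_enum.
by rewrite mem_enum => EA HE; exists E.
Qed.

Lemma sum_aff (S : {set J}) (l1 l2 h : J -> R) (a b : R) :
  \sum_(j in S) (a * l1 j + b * l2 j) * h j =
  a * \sum_(j in S) l1 j * h j + b * \sum_(j in S) l2 j * h j.
Proof.
rewrite !mulr_sumr -big_split /=; apply: eq_bigr => j _; ring.
Qed.

Lemma sum_aff1 (S : {set J}) (l1 l2 : J -> R) (a b : R) :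
  \sum_(j in S) (a * l1 j + b * l2 j) =
  a * \sum_(j in S) l1 j + b * \sum_(j in S) l2 j.
Proof.
rewrite !mulr_sumr -big_split /=; apply: eq_bigr => j _; ring.
Qed.

Definition tt (n : nat) : R := (n.+1%:R)^-1.

Lemma tt_gt0 n : 0 < tt n.
Proof. by rewrite /tt invr_gt0 ltr0n. Qed.

Lemma tt_lt n m : (n < m)%N -> tt m < tt n.
Proof.
move=> h; rewrite /tt ltf_pV2 ?posrE ?ltr0n // ltr_nat ltnS.
exact: h.
Qed.

Lemma closed_conv (E : {set J}) (p v : pt) : aff_indep x E ->
  (forall N, exists n, (N <= n)%N /\
     conv x E (p.1 + tt n * v.1, p.2 + tt n * v.2)) ->
  conv x E p.
Proof.
move=> ai hf.
have [n1 [_ [l1 [l10 [l11 hc1]]]]] := hf 0%N.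
have [n2 [n12 [l2 [l20 [l21 hc2]]]]] := hf n1.+1.
set t1 := tt n1; set t2 := tt n2.
have t12 : t2 < t1 by apply: tt_lt.
have t20 : 0 < t2 := tt_gt0 n2.
have d0 : t2 - t1 != 0 by apply/eqP => h; move: t12; lra.
pose al t := (t - t1) / (t2 - t1).
pose Lam t j := (1 - al t) * l1 j + al t * l2 j.
have Lsum t : \sum_(j in E) Lam t j = 1.
  by rewrite sum_aff1 l11 l21; ring.
have L1 t : \sum_(j in E) Lam t j * (x j).1 = p.1 + t * v.1.
  rewrite sum_aff -comb1 -comb1 hc1 hc2 /= -/t1 -/t2 /al; field; exact: d0.
have L2 t : \sum_(j in E) Lam t j * (x j).2 = p.2 + t * v.2.
  rewrite sum_aff -comb2 -comb2 hc1 hc2 /= -/t1 -/t2 /al; field; exact: d0.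
pose k j := (l2 j - l1 j) / (t2 - t1).
have Laff t j : Lam t j = Lam 0 j + t * k j.
  by rewrite /Lam /al /k; field; exact: d0.
exists (Lam 0); split; last first.
  split; first exact: Lsum.
  by rewrite /comb L1 L2 !mul0r !addr0; case: (p).
move=> j jE; rewrite leNgt; apply/negP => hneg.
have Kge : 0 <= `|k j| / (- Lam 0 j) by apply: divr_ge0 => //; lra.
have [n [hn [ln [ln0 [ln1 hcn]]]]] := hf (Num.Def.archi_bound (`|k j| / (- Lam 0 j))).
have eqn : ln j = Lam (tt n) j.
  have := ai (fun i => ln i - Lam (tt n) i); rewrite sumrB ln1 Lsum subrr.
  move=> /(_ erefl); rewrite /comb.
  under eq_bigr do rewrite mulrBl.
  under [X in (_, X)]eq_bigr do rewrite mulrBl.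
  rewrite !sumrB -comb1 -comb2 hcn L1 L2 /= !subrr => /(_ erefl j jE) /eqP.
  by rewrite subr_eq0 => /eqP.
have := ln0 j jE; rewrite eqn Laff.
have hb := archi_boundP Kge.
have hnb : (Num.Def.archi_bound (`|k j| / (- Lam 0 j)))%:R <= (n.+1)%:R :> R.
  by rewrite ler_nat; apply: leq_trans hn _.
have h1 : `|k j| / (- Lam 0 j) < n.+1%:R by apply: lt_le_trans hb hnb.
have h2 : `|k j| < n.+1%:R * (- Lam 0 j).
  by rewrite -ltr_pdivrMr ?oppr_gt0 // mulrC.
have h3 : tt n * `|k j| < - Lam 0 j.
  have e : tt n * (n.+1%:R * (- Lam 0 j)) = - Lam 0 j.
    by rewrite /tt mulrA mulVf ?pnatr_eq0 // mul1r.
  by rewrite -e ltr_pM2l ?tt_gt0.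
have h4 : tt n * k j <= tt n * `|k j| by rewrite ler_pM2l ?tt_gt0 // ler_norm.
lra.
Qed.

Lemma relint_conv D s : relint x D s -> conv x D s.
Proof. by move=> [l [lp h]]; exists l; split => // j jD; apply: ltW; apply: lp. Qed.

Lemma relint_sub (D S : {set J}) s : aff_indep x D -> relint x D s ->
  conv x S s -> S \subset D -> D \subset S.
Proof.
move=> ai [l [lp [l1 hc]]] [m [m0 [m1 hm]]] SD.
pose m' j := if j \in S then m j else 0.
have eS (h : J -> R) : \sum_(j in D) m' j * h j = \sum_(j in S) m j * h j.
  rewrite (sum_sub SD); last by move=> j _ /negbTE jS; rewrite /m' jS mul0r.
  by apply: eq_bigr => j jS; rewrite /m' jS.
have eS1 : \sum_(j in D) m' j = \sum_(j in S) m j.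
  rewrite (sum_sub SD); last by move=> j _ /negbTE jS; rewrite /m' jS.
  by apply: eq_bigr => j jS; rewrite /m' jS.
have := ai (fun j => l j - m' j); rewrite sumrB l1 eS1 m1 subrr => /(_ erefl).
rewrite /comb.
under eq_bigr do rewrite mulrBl.
under [X in (_, X)]eq_bigr do rewrite mulrBl.
rewrite !sumrB !eS -!comb1 -!comb2 hc hm !subrr => /(_ erefl) H.
apply/subsetP => j jD; have := H j jD; rewrite /m'; case: ifP => // _.
by rewrite subr0 => h; move: (lp j jD); rewrite h ltxx.
Qed.

Lemma sum_setT (f : J -> R) : \sum_(j in [set: J]) f j = \sum_j f j.
Proof. by apply: eq_bigl => j; rewrite in_setT. Qed.

Lemma conv_all (m : J -> R) (p : pt) : (forall j, 0 <= m j) -> \sum_j m j = 1 ->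
  \sum_j m j * (x j).1 = p.1 -> \sum_j m j * (x j).2 = p.2 -> conv x [set: J] p.
Proof.
move=> m0 m1 h1 h2; exists m; split => //; split; first by rewrite sum_setT.
by rewrite /comb !sum_setT h1 h2; case: (p).
Qed.

Lemma sum2 (a b : J) (f : J -> R) : a != b ->
  \sum_(i in [set a; b]) f i = f a + f b.
Proof. by move=> ab; rewrite big_setU1 /= ?inE // big_set1. Qed.

Lemma tt_le1 n : tt n <= 1.
Proof. by rewrite /tt invr_le1 ?ler1n ?unitfE ?pnatr_eq0 ?ltr0n. Qed.

Lemma all_on_line K s a b (mu : J -> R) : triangulation x K -> a != b ->
  [set a; b] \in K -> relint x [set a; b] s ->
  (forall T, T \in K -> [set a; b] \subset T -> #|T| <> 3%N) ->
  (forall j, 0 <= mu j) -> \sum_j mu j = 1 ->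
  \sum_j mu j * (x j).1 = s.1 -> \sum_j mu j * (x j).2 = s.2 ->
  forall j, ((x j).1 - s.1) * ((x b).2 - (x a).2)
            - ((x j).2 - s.2) * ((x b).1 - (x a).1) = 0.
Proof.
move=> [hK _ _ hint hcov] ab abK rel notri mu0 mu1 m1 m2 j.
apply: NNPP => hj.
pose q n : pt := (s.1 + tt n * ((x j).1 - s.1), s.2 + tt n * ((x j).2 - s.2)).
have hq n : conv x [set: J] (q n).
  have t0 := tt_gt0 n; have t1 := tt_le1 n.
  have sm (h : J -> R) : \sum_i ((1 - tt n) * mu i + tt n * dl j i) * h i =
      (1 - tt n) * \sum_i mu i * h i + tt n * h j.
    rewrite !mulr_sumr -sum_dl mulr_sumr -big_split /=.
    by apply: eq_bigr => i _; ring.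
  apply: (conv_all (m := fun i => (1 - tt n) * mu i + tt n * dl j i)).
  - move=> i; apply: addr_ge0; apply: mulr_ge0; [lra | exact: mu0 | lra | exact: dl_ge0].
  - rewrite big_split /= -!mulr_sumr mu1 (eq_bigr (fun i => dl j i * 1)) ?sum_dl.
      ring.
    by move=> i _; rewrite mulr1.
  - by rewrite sm m1 /q /=; ring.
  - by rewrite sm m2 /q /=; ring.
have [E EK hE] := @pigeon _ K (fun n E => conv x E (q n))
   (fun n => (hcov (q n)).1 (hq n)).
have [_ [E3 aiE]] := hK E EK.
have cE : conv x E s.
  apply: (closed_conv (v := ((x j).1 - s.1, (x j).2 - s.2)) aiE).
  by move=> N; have [n [hn hc]] := hE N; exists n.
have cI := (hint _ _ abK EK s).1 (conj (relint_conv rel) cE).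
have [_ [_ aiab]] := hK _ abK.
have sub := relint_sub aiab rel cI (subsetIl _ _).
have subE : [set a; b] \subset E.
  by apply: (subset_trans sub); apply: subsetIr.
have cab : #|[set a; b]| = 2%N by rewrite cards2 ab.
case: (eqVneq #|E| 3%N) => [h3|n3]; first by exact: (notri E EK subE h3).
have Eab : E = [set a; b].
  apply/eqP; rewrite eq_sym eqEcard subE cab /=.
  by move: E3 n3; rewrite leq_eqVlt => /orP [/eqP ->|]; rewrite ?eqxx // ltnS.
have [n [_ [m [_ [mm1 hm]]]]] := hE 0%N.
move: mm1 hm; rewrite Eab sum2 // => mm1 hm.
move: rel => [l [_ [l1 hl]]]; move: l1 hl; rewrite sum2 // => l1 hl.
have hm1 := congr1 fst hm; have hm2 := congr1 snd hm.
have hl1 := congr1 fst hl; have hl2 := congr1 snd hl.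
move: hm1 hm2 hl1 hl2; rewrite /comb /= !sum2 // => hm1 hm2 hl1 hl2.
apply: hj.
have tn0 := tt_gt0 n.
have e : tt n * (((x j).1 - s.1) * ((x b).2 - (x a).2) - ((x j).2 - s.2) * ((x b).1 - (x a).1)) = 0.
  have ea : m a = 1 - m b by move: mm1; lra.
  have la : l a = 1 - l b by lra.
  have E1 : tt n * ((x j).1 - s.1) = (m b - l b) * ((x b).1 - (x a).1).
    have : s.1 + tt n * ((x j).1 - s.1) = m a * (x a).1 + m b * (x b).1 by rewrite hm1.
    rewrite -hl1 ea la => h; lra.
  have E2 : tt n * ((x j).2 - s.2) = (m b - l b) * ((x b).2 - (x a).2).
    have : s.2 + tt n * ((x j).2 - s.2) = m a * (x a).2 + m b * (x b).2 by rewrite hm2.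
    rewrite -hl2 ea la => h; lra.
  rewrite mulrBr !mulrA E1 E2; ring.
by move/eqP: e; rewrite mulf_eq0 (gt_eqF tn0) /= => /eqP.
Qed.

Lemma sum_supp (mu F G : J -> R) : (forall j, mu j != 0 -> F j = G j) ->
  \sum_j mu j * F j = \sum_j mu j * G j.
Proof.
move=> h; apply: eq_bigr => j _.
by case: (eqVneq (mu j) 0) => [->|/h ->]; rewrite ?mul0r.
Qed.

Lemma pos_aux (R0 u v : R) : 0 < R0 -> u ^+ 2 = R0 -> v ^+ 2 < R0 -> 0 < R0 + u * v.
Proof.
move=> h0 hu hv; rewrite ltNge; apply/negP => h.
have h1 : u * v <= - R0 by lra.
have h2 : R0 ^+ 2 <= (u * v) ^+ 2 by nra.
have h3 : (u * v) ^+ 2 = R0 * v ^+ 2 by rewrite exprMn hu.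
have h4 : R0 * v ^+ 2 < R0 * R0 by rewrite ltr_pM2l.
by move: h2; rewrite h3 expr2 leNgt h4.
Qed.

Lemma edge_vertex K s a b (mu : J -> R) : injective x -> triangulation x K ->
  a != b -> [set a; b] \in K -> relint x [set a; b] s ->
  (forall j, 0 <= mu j) ->
  (forall j, mu j != 0 -> d2 s (x j) = maxdist x s ^+ 2) ->
  \sum_j mu j = 1 -> \sum_j mu j * (x j).1 = s.1 -> \sum_j mu j * (x j).2 = s.2 ->
  (forall j, ((x j).1 - s.1) * ((x b).2 - (x a).2)
            - ((x j).2 - s.2) * ((x b).1 - (x a).1) = 0) ->
  d2 s (x a) = maxdist x s ^+ 2.
Proof.
move=> xinj [_ hclos hext _ _] ab abK rel mu0 muF mu1 m1 m2 hline.
set r2 := maxdist x s ^+ 2.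
apply: NNPP => hn.
have mua : mu a = 0.
  by case: (eqVneq (mu a) 0) => // /muF h; exfalso; apply: hn.
have ha : d2 s (x a) < r2.
  by rewrite lt_neqAle le_d2_max andbT; apply/eqP.
set e1 := (x b).1 - (x a).1; set e2 := (x b).2 - (x a).2.
set E2 := e1 ^+ 2 + e2 ^+ 2.
have E20 : 0 < E2.
  rewrite lt0r addr_ge0 ?sqr_ge0 // andbT; apply/negP => /eqP h.
  have h1 : e1 ^+ 2 = 0 by have := sqr_ge0 e1; have := sqr_ge0 e2; rewrite /E2 in h; lra.
  have h2 : e2 ^+ 2 = 0 by have := sqr_ge0 e1; have := sqr_ge0 e2; rewrite /E2 in h; lra.
  move/eqP: h1; rewrite sqrf_eq0 subr_eq0 => /eqP h1.
  move/eqP: h2; rewrite sqrf_eq0 subr_eq0 => /eqP h2.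
  have : x b = x a by move: h1 h2; case: (x b) => ? ?; case: (x a) => ? ? /= -> ->.
  by move/xinj => e; move: ab; rewrite e eqxx.
have r20 : 0 < r2 by have := d2_ge0 s (x a); lra.
pose g j := ((x j).1 - s.1) * e1 + ((x j).2 - s.2) * e2.
have par1 j : ((x j).1 - s.1) * E2 = g j * e1.
  have := hline j; rewrite -/e1 -/e2 => h.
  have id : ((x j).1 - s.1) * E2 - g j * e1 =
     e2 * (((x j).1 - s.1) * e2 - ((x j).2 - s.2) * e1) by rewrite /g /E2; ring.
  by apply/eqP; rewrite -subr_eq0 id h mulr0.
have par2 j : ((x j).2 - s.2) * E2 = g j * e2.
  have := hline j; rewrite -/e1 -/e2 => h.
  have id : ((x j).2 - s.2) * E2 - g j * e2 =
     - e1 * (((x j).1 - s.1) * e2 - ((x j).2 - s.2) * e1) by rewrite /g /E2; ring.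
  by apply/eqP; rewrite -subr_eq0 id h mulr0.
have gsq j : g j ^+ 2 = d2 s (x j) * E2.
  have := hline j; rewrite -/e1 -/e2 => h.
  have id : g j ^+ 2 = d2 s (x j) * E2
     - (((x j).1 - s.1) * e2 - ((x j).2 - s.2) * e1) ^+ 2 by rewrite /g /E2 /d2; ring.
  by rewrite id h expr0n /= subr0.
set c := g a / (r2 * E2).
have rE0 : 0 < r2 * E2 by apply: mulr_gt0.
pose nu j := mu j * (1 + g j * c).
have nu0 j : 0 <= nu j.
  rewrite /nu; case: (eqVneq (mu j) 0) => [->|mj]; first by rewrite mul0r.
  apply: mulr_ge0 => //; apply: ltW.
  have e : 1 + g j * c = (r2 * E2 + g j * g a) / (r2 * E2).
    by rewrite /c; field; rewrite !gt_eqF.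
  rewrite e; apply: divr_gt0 => //; apply: pos_aux => //.
    by rewrite gsq muF.
  by rewrite gsq ltr_pM2r.
have S1 : \sum_j mu j * ((x j).1 - s.1) = 0.
  under eq_bigr do rewrite mulrBr.
  by rewrite sumrB -mulr_suml mu1 mul1r m1 subrr.
have S2 : \sum_j mu j * ((x j).2 - s.2) = 0.
  under eq_bigr do rewrite mulrBr.
  by rewrite sumrB -mulr_suml mu1 mul1r m2 subrr.
have Sg : \sum_j mu j * g j = 0.
  rewrite (eq_bigr (fun j => e1 * (mu j * ((x j).1 - s.1)) + e2 * (mu j * ((x j).2 - s.2)))).
    by rewrite big_split /= -!mulr_sumr S1 S2 !mulr0 addr0.
  by move=> j _; rewrite /g; ring.
have nusum : \sum_j nu j = 1.
  rewrite (eq_bigr (fun j => mu j + c * (mu j * g j))); last first.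
    by move=> j _; rewrite /nu; ring.
  by rewrite big_split /= -mulr_sumr Sg mulr0 addr0.
have nuc (v : J -> R) (ev : R) : (forall j, v j * E2 = g j * ev) ->
    \sum_j mu j * v j = 0 ->
    \sum_j nu j * v j = g a * ev / E2.
  move=> hv Sv.
  have supp : \sum_j mu j * (g j * v j) = \sum_j mu j * (r2 * ev).
    apply: sum_supp => j mj.
    apply: (mulIf (lt0r_neq0 E20)); rewrite -mulrA hv mulrA -expr2 gsq muF // -/r2.
    ring.
  rewrite (eq_bigr (fun j => mu j * v j + c * (mu j * (g j * v j)))); last first.
    by move=> j _; rewrite /nu; ring.
  rewrite big_split /= -mulr_sumr supp Sv -mulr_suml mu1 /c; field.
  by rewrite !gt_eqF.
have nu1 : \sum_j nu j * (x j).1 = (x a).1.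
  have := nuc (fun j => (x j).1 - s.1) e1 par1 S1.
  under eq_bigr do rewrite mulrBr.
  rewrite sumrB -mulr_suml nusum mul1r => h.
  have : (x a).1 - s.1 = g a * e1 / E2.
    by apply: (mulIf (lt0r_neq0 E20)); rewrite par1; field; rewrite gt_eqF.
  lra.
have nu2 : \sum_j nu j * (x j).2 = (x a).2.
  have := nuc (fun j => (x j).2 - s.2) e2 par2 S2.
  under eq_bigr do rewrite mulrBr.
  rewrite sumrB -mulr_suml nusum mul1r => h.
  have : (x a).2 - s.2 = g a * e2 / E2.
    by apply: (mulIf (lt0r_neq0 E20)); rewrite par2; field; rewrite gt_eqF.
  lra.
have nua : nu a = 0 by rewrite /nu mua mul0r.
have ea : extreme x a.
  apply/hext; apply: (hclos _ _ abK).
  - by apply/subsetP => i; rewrite !inE => ->.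
  - by apply/set0Pn; exists a; rewrite inE.
apply: ea; exists nu; split; first by move=> j _.
split; first by rewrite sum_nota.
rewrite /comb sum_nota ?nua ?mul0r // sum_nota ?nua ?mul0r //.
by rewrite nu1 nu2; case: (x a).
Qed.
End Work.

Theorem lemma6 (R : realType) (J : finType) (x : J -> pt R)
  (x_inj : injective x) (J_nonempty : (0 < #|J|)%N)
  (K : {set {set J}}) (HK : farthest_delaunay x K) (s : pt R) :
  one_centre x s <->
  exists2 D, D \in K & relint x D s /\ VorD x D s.
Proof.
split; last by move=> [D _ [hr hv]]; exact: reverse_dir hr hv.
move=> hs.
have [mu [mu0 muF mu1 m1 m2]] := centre_in_hull J_nonempty hs.
have [HT HD] := HK.
have HT' := HT; case: HT' => hK hclos hext hint hcov.
have cs : conv x [set: J] s := conv_all mu0 mu1 m1 m2.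
have [D DK cD] := (hcov s).1 cs.
have [D' D'K [subD rel]] := support_face HT DK cD.
exists D' => //; split => //.
suff H : forall j, j \in D' -> d2 s (x j) = maxdist x s ^+ 2.
  by move=> j jD; apply: vor_of_d2; apply: H.
case: (classic (exists2 T, T \in K & D' \subset T /\ #|T| = 3%N)) =>
   [[T TK [sub T3]] | notri].
  have [c [rT [h1 h2]]] := HD T TK T3.
  move: rel => [l [lp [l1 hc]]].
  exact: (tri_case J_nonempty hs sub h1 h2 lp l1 hc).
have notri' : forall T, T \in K -> D' \subset T -> #|T| <> 3%N.
  by move=> T TK sub h; apply: notri; exists T.
have [D'ne _] := hK D' D'K.
have Dle : (#|D'| <= 2)%N.
  have [_ [D3 _]] := hK D DK.
  have := subset_leq_card subD.
  case: (eqVneq #|D| 3%N) => [e|ne].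
    by exfalso; apply: (notri' D DK).
  move: D3 ne; rewrite leq_eqVlt => /orP [/eqP ->|]; first by rewrite eqxx.
  by rewrite ltnS => h _ h2; apply: leq_trans h2 h.
have D'pos : (0 < #|D'|)%N by rewrite card_gt0.
case: (eqVneq #|D'| 1%N) => [/eqP/cards1P [a ea] | n1].
  subst D'; move=> j; rewrite inE => /eqP ->.
  have sa : s = x a.
    move: rel => [l [_ [l1 hc]]]; move: l1 hc; rewrite big_set1 /comb !big_set1 => ->.
    by rewrite !mul1r; case: (x a) => ? ? <-.
  exact: (vertex_case HT D'K sa mu0 muF mu1 m1 m2).
have /cards2P [a [b [ab ea]]] : #|D'| == 2%N.
  by move: Dle D'pos n1; case: #|D'| => [|[|[|]]].
subst D'; move=> j; rewrite !inE => /orP [/eqP ->| /eqP ->].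
  have hl := all_on_line HT ab D'K rel notri' mu0 mu1 m1 m2.
  exact: (edge_vertex x_inj HT ab D'K rel mu0 muF mu1 m1 m2 hl).
have e : [set b; a] = [set a; b] by rewrite setUC.
have ba : b != a by rewrite eq_sym.
rewrite -e in D'K rel notri'.
have hl := all_on_line HT ba D'K rel notri' mu0 mu1 m1 m2.
exact: (edge_vertex x_inj HT ba D'K rel mu0 muF mu1 m1 m2 hl).
Qed.
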